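(* Assume the standing setup below and let $\rho\ge0$. If $\mathcal{G}$ is a quasi-concave hill, then $\mathcal{NE}_\rho$ is a singleton, and its unique element is the unique optimizer of the problem $\max_{\mathbf{x}} U(\mathbf{x})$ subject to $\mathbf{x}\in\mathcal{S}_\rho$, where $U(\mathbf{x})=\sum_{i\in\mathcal{V}}[p_i(\mathbf{x}_i)-p_i(0)]$.
   Context: Standing setup: $\mathcal{G}=(\mathcal{V},\mathcal{E})$ is a finite, connected, undirected graph; $\mathcal{N}^i$ denotes the set of neighbours of node $i$. For $\rho\ge0$, $\mathcal{S}_\rho=\{\mathbf{x}\in\mathbb{R}^{|\mathcal{V}|}:\mathbf{x}\ge 0,\ \sum_{i\in\mathcal{V}}\mathbf{x}_i=\rho\}$, and $\mathrm{supp}(\mathbf{x})=\{i:\mathbf{x}_i\neq 0\}$. For each node $i$, $p_i:[0,\infty)\to\mathbb{R}$ is twice continuously differentiable and strictly concave, and $u_i:=p_i'$ (right derivative at $0$), so each $u_i$ is strictly decreasing. The maximum payoff density parameter (MPDP) of node $i$ is $\mathbf{a}_i:=u_i(0)$. The set of Nash equilibria is $\mathcal{NE}_\rho=\{\mathbf{x}\in\mathcal{S}_\rho: u_i(\mathbf{x}_i)\ge u_j(\mathbf{x}_j)\ \forall j\in\mathcal{N}^i,\ \forall i\in\mathrm{supp}(\mathbf{x})\}$. A path $\pi(1),\dots,\pi(n)$ in $\mathcal{G}$ (distinct nodes, consecutive ones adjacent) is a path with quasi-concave MPDP's if for all $1\le k\le m\le l\le n$, $\mathbf{a}_{\pi(m)}\ge\min\{\mathbf{a}_{\pi(k)},\mathbf{a}_{\pi(l)}\}$.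 $\mathcal{G}$ is a quasi-concave hill (QCH) if between every two distinct nodes there exists a path with quasi-concave MPDP's. *)

(* Defs.v *)
From HB Require Import structures.
From mathcomp Require Import all_boot all_order all_algebra.
From mathcomp Require Import all_classical all_reals all_analysis.
Set Implicit Arguments. Unset Strict Implicit. Unset Printing Implicit Defensive.
Import Order.TTheory GRing.Theory Num.Theory.
Import numFieldNormedType.Exports.
Local Open Scope classical_set_scope.
Local Open Scope ring_scope.

Section Defs.
Variables (R : realType) (V : finType).

Definition simplexS (rho : R) : set (V -> R) :=
  [set x | (forall i, 0 <= x i) /\ \sum_(i : V) x i = rho].

(* Nash equilibria: E is the (symmetric) adjacency relation, u the densities *)
Definition NE (E : rel V) (u : V -> R -> R) (rho : R) : set (V -> R) :=
  [set x | simplexS rho x /\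
     (forall i, x i != 0 -> forall j, E i j -> u j (x j) <= u i (x i))].

Definition Upot (p : V -> R -> R) (x : V -> R) : R :=
  \sum_(i : V) (p i (x i) - p i 0).

(* the path i :: t (distinct nodes, consecutive adjacent) from i to j
   has quasi-concave MPDP's a *)
Definition qc_path (E : rel V) (a : V -> R) (i j : V) (t : seq V) : Prop :=
  let s := i :: t in
  [/\ uniq s, path E i t, last i t = j &
   forall k m l : nat, (k <= m <= l)%N -> (l < size s)%N ->
     Num.min (a (nth i s k)) (a (nth i s l)) <= a (nth i s m)].

Definition QCH (E : rel V) (a : V -> R) : Prop :=
  forall i j : V, i != j -> exists t : seq V, qc_path E a i j t.

End Defs.

(* p is twice continuously differentiable on [0,oo) (one-sided at 0),
   with p' = u (right derivative at 0). *)
Definition C2_nonneg (R : realType) (p u : R -> R) : Prop :=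
  exists u' : R -> R,
    [/\ (forall x : R, 0 < x -> is_derive x 1 p (u x)),
        (fun h : R => h^-1 * (p h - p 0)) @ 0^'+ --> u 0,
        (forall x : R, 0 < x -> is_derive x 1 u (u' x)),
        (fun h : R => h^-1 * (u h - u 0)) @ 0^'+ --> u' 0 &
        {within [set x : R | 0 <= x], continuous u'}].

Definition strictly_concave_nonneg (R : realType) (p : R -> R) : Prop :=
  forall x y t : R, 0 <= x -> 0 <= y -> x != y -> 0 < t < 1 ->
    t * p x + (1 - t) * p y < p (t * x + (1 - t) * y).

(* Main.v *)
Require Import Defs.
From HB Require Import structures.
From mathcomp Require Import all_boot all_order all_algebra.
From mathcomp Require Import all_classical all_reals all_analysis.
From mathcomp Require Import ring lra.
Import Order.TTheory GRing.Theory Num.Theory.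
Import numFieldNormedType.Exports.
Local Open Scope classical_set_scope.
Local Open Scope ring_scope.

Lemma dq_pos {R : realType} {p : R -> R} {x l : R} :
  is_derive x 1 p l -> forall e : R, 0 < e -> exists2 d, 0 < d &
   forall h, h != 0 -> `|h| < d -> `|l - h^-1 * (p (x + h) - p x)| < e.
Proof.
move=> [dp <-] e e0.
have := dp; rewrite /derivable => /cvgrPdist_lt /(_ e e0).
rewrite /dnbhs /within /= => /nbhs_ballP [d d0 Hd].
exists d => // h h0 hd.
have := Hd h; rewrite /ball /= sub0r normrN => /(_ hd h0).
have hA : h%:A = h by rewrite /GRing.scale /= mulr1.
rewrite hA (addrC h x) /GRing.scale /= => H.
exact: H.
Qed.

Lemma dq_right {R : realType} {f : R -> R} {l : R} :
  f @ 0^'+ --> l -> forall e : R, 0 < e -> exists2 d, 0 < d &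
   forall h, 0 < h -> h < d -> `|l - f h| < e.
Proof.
move=> /cvgrPdist_lt H e e0; have := H e e0.
rewrite /at_right /within /= => /nbhs_ballP [d d0 Hd].
exists d => // h h0 hd.
apply: (Hd h) => //; rewrite /ball /= sub0r normrN gtr0_norm //.
Qed.

Definition clamp0 {R : realType} (t : R) : R := if t < 0 then 0 else t.

Section OneNode.
Variables (R : realType) (p u : R -> R).
Hypotheses (Hc : C2_nonneg p u) (Hs : strictly_concave_nonneg p).

Lemma DQ x : 0 <= x -> forall e : R, 0 < e -> exists2 d : R, 0 < d &
  forall h, h != 0 -> `|h| < d -> 0 <= x + h ->
    `|u x - h^-1 * (p (x + h) - p x)| < e.
Proof.
move=> x0 e e0; case: Hc => u' [Hd Hr _ _ _].
have [xgt0|] := ltrP 0 x.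
  have [d d0 Hdd] := dq_pos (Hd x xgt0) e e0.
  by exists d => // h h0 hd _; exact: Hdd.
move=> xle0; have -> : x = 0 by apply/eqP; rewrite eq_le xle0 x0.
have [d d0 Hdd] := dq_right Hr e e0.
exists d => // h h0 hd; rewrite add0r => hge0.
have hgt0 : 0 < h by rewrite lt_neqAle eq_sym h0 hge0.
by apply: Hdd => //; rewrite -(gtr0_norm hgt0).
Qed.

Lemma conc_weak x y t : 0 <= x -> 0 <= y -> 0 <= t <= 1 ->
  t * p x + (1 - t) * p y <= p (t * x + (1 - t) * y).
Proof.
move=> x0 y0 /andP[t0 t1].
have [->|xy] := eqVneq x y.
  have -> : t * y + (1 - t) * y = y by ring.
  by rewrite -mulrDl subrKC mul1r.
have [->|tn0] := eqVneq t 0.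
  by rewrite !mul0r !add0r subr0 !mul1r.
have [->|tn1] := eqVneq t 1.
  by rewrite subrr !mul0r !addr0 !mul1r.
apply: ltW; apply: Hs => //.
by rewrite lt_neqAle eq_sym tn0 t0 /= lt_neqAle tn1 t1.
Qed.

Lemma tangent x z : 0 <= x -> 0 <= z -> p z <= p x + u x * (z - x).
Proof.
move=> x0 z0.
have [->|zx] := eqVneq z x; first by rewrite subrr mulr0 addr0.
set w := z - x; set c := p z - p x.
have w0 : w != 0 by rewrite subr_eq0.
have aw : 0 < `|w| by rewrite normr_gt0.
rewrite -lerBlDl -/c leNgt; apply/negP => Hlt.
pose e := (c - u x * w) / `|w|.
have e0 : 0 < e by rewrite divr_gt0 // subr_gt0.
have [d d0 Hd] := @DQ x x0 e e0.
pose t := d / (d + `|w|).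
have dw0 : 0 < d + `|w| by rewrite addr_gt0.
have t0 : 0 < t by rewrite divr_gt0.
have t1 : t < 1 by rewrite ltr_pdivrMr // mul1r ltrDl.
pose h := t * w.
have h0 : h != 0 by rewrite mulf_neq0 // gt_eqF.
have hd : `|h| < d.
  rewrite normrM gtr0_norm // /t mulrAC ltr_pdivrMr // ltr_pM2l //.
  by rewrite ltrDr.
have xh : x + h = t * z + (1 - t) * x by rewrite /h /w; ring.
have xh0 : 0 <= x + h.
  rewrite xh addr_ge0 // mulr_ge0 // ?ltW //; lra.
have Hc2 := @conc_weak z x t z0 x0 (introT andP (conj (ltW t0) (ltW t1))).
rewrite -xh in Hc2.
set Q := p (x + h) - p x.
have HQ : t * c <= Q by rewrite /c /Q; nra.
have H := Hd h h0 hd xh0.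
have ah : 0 < `|h| by rewrite normr_gt0.
have H2 : `|u x * h - Q| < e * `|h|.
  have -> : u x * h - Q = (u x - h^-1 * Q) * h.
    by rewrite mulrBl [h^-1 * Q * h]mulrAC mulVf // mul1r.
  by rewrite normrM ltr_pM2r.
have eh : e * `|h| = t * (c - u x * w).
  rewrite /e /h normrM (gtr0_norm t0); field.
  by rewrite gt_eqF.
have H3 := ler_norm (Q - u x * h).
rewrite distrC eh in H2.
have : Q < t * c.
  have : u x * h = t * (u x * w) by rewrite /h; ring.
  nra.
lra.
Qed.

Lemma u_strict x y : 0 <= x -> x < y -> u y < u x.
Proof.
move=> x0 xy.
have y0 : 0 <= y by apply: le_trans x0 (ltW xy).
pose m := 2^-1 * x + (1 - 2^-1) * y.
have m0 : 0 <= m by rewrite /m; lra.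
have Hsc : 2^-1 * p x + (1 - 2^-1) * p y < p m.
  apply: Hs => //; first by rewrite lt_eqF.
  lra.
have T1 := @tangent x m x0 m0.
have T2 := @tangent y m y0 m0.
have e1 : m - x = 2^-1 * (y - x) by rewrite /m; field.
have e2 : m - y = - (2^-1 * (y - x)) by rewrite /m; field.
rewrite e1 in T1; rewrite e2 in T2.
have d0 : 0 < 2^-1 * (y - x) by rewrite mulr_gt0 // ?invr_gt0 // subr_gt0.
have : u y * (2^-1 * (y - x)) < u x * (2^-1 * (y - x)) by nra.
by rewrite ltr_pM2r.
Qed.

Lemma u_weak x y : 0 <= x -> x <= y -> u y <= u x.
Proof.
move=> x0; rewrite le_eqVlt => /orP[/eqP -> //|xy].
exact: ltW (@u_strict x y x0 xy).
Qed.

Lemma perturb x x' : 0 <= x -> 0 < x' -> u x' < u x ->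
  exists eps : R, [/\ 0 < eps, eps <= x' &
    p x' - p (x' - eps) < p (x + eps) - p x].
Proof.
move=> x0 x'0 ux.
pose e := (u x - u x') / 2.
have e0 : 0 < e by rewrite /e divr_gt0 // subr_gt0.
have [d1 d10 H1] := @DQ x x0 e e0.
have [d2 d20 H2] := @DQ x' (ltW x'0) e e0.
pose m := Num.min d1 (Num.min d2 x').
have m0 : 0 < m by rewrite /m !lt_min d10 d20 x'0.
pose eps := m / 2.
have eps0 : 0 < eps by rewrite /eps divr_gt0.
have epsm : eps < m by rewrite /eps; lra.
have md1 : m <= d1 by rewrite /m ge_min lexx.
have md2 : m <= d2 by rewrite /m !ge_min lexx orbT.
have mx' : m <= x' by rewrite /m !ge_min lexx !orbT.
exists eps; split => //; first lra.
have A := H1 eps (negbT (gt_eqF eps0)).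
rewrite gtr0_norm // in A.
have {A} A := A (lt_le_trans epsm md1) (addr_ge0 x0 (ltW eps0)).
have B := H2 (- eps).
rewrite oppr_eq0 normrN gtr0_norm // in B.
have {B} B := B (negbT (gt_eqF eps0)) (lt_le_trans epsm md2) (ltac:(lra)).
move: A B; rewrite !ltr_distlC => /andP[A _] /andP[_ B].
rewrite invrN mulNr -mulrN opprB in B.
have : eps^-1 * (p x' - p (x' - eps)) < eps^-1 * (p (x + eps) - p x).
  rewrite /e in A B; lra.
by rewrite ltr_pM2l // invr_gt0.
Qed.


Lemma ptilde_cont : continuous (fun t : R => p (clamp0 t)).
Proof.
move=> t; apply/cvgrPdist_lt => e e0; apply/nbhs_ballP.
have [tlt0|tge0] := ltrP t 0.
  exists (- t); first by rewrite /= oppr_gt0.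
  move=> s; rewrite /ball_ /= => hs.
  have slt0 : s < 0.
    move: hs; rewrite /ball_ /= ltr_norml => /andP[+ _]; lra.
  by rewrite /clamp0 tlt0 slt0 subrr normr0.
have [d1 d10 H1] := @DQ t tge0 1 ltr01.
pose K := `|u t| + 1.
have K0 : 0 < K by rewrite /K ltr_wpDl.
exists (Num.min d1 (e / K)); first by rewrite /= lt_min d10 divr_gt0.
move=> s; rewrite /ball_ /= lt_min => /andP[hs1 hs2].
have -> : clamp0 t = t by rewrite /clamp0 ltNge tge0.
pose h := clamp0 s - t.
have hle : `|h| <= `|t - s|.
  rewrite /h /clamp0; have [s0|s0] := ltrP s 0.
    rewrite sub0r normrN (ger0_norm tge0) ger0_norm; lra.
  by rewrite distrC.
have -> : clamp0 s = t + h by rewrite /h addrC subrK.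
have [->|h0] := eqVneq h 0; first by rewrite addr0 subrr normr0.
have th0 : 0 <= t + h.
  rewrite /h addrC subrK /clamp0; case: ltrP => //.
have := H1 h h0 (le_lt_trans hle hs1) th0.
set Q := p (t + h) - p t => HQ.
have ah : 0 < `|h| by rewrite normr_gt0.
have HQ2 : `|h^-1 * Q| < K.
  have : `|h^-1 * Q| <= `|u t| + `|u t - h^-1 * Q|.
    have := ler_normB (u t) (u t - h^-1 * Q).
    by have -> : u t - (u t - h^-1 * Q) = h^-1 * Q by ring.
  rewrite /K; lra.
have HQ3 : `|Q| < K * `|h|.
  have -> : Q = (h^-1 * Q) * h by rewrite mulrAC mulVf // mul1r.
  by rewrite normrM ltr_pM2r.
rewrite distrC -/Q.
have : K * `|h| < e.
  rewrite mulrC -ltr_pdivlMr //.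
  exact: le_lt_trans hle hs2.
lra.
Qed.

End OneNode.

Lemma perturb2 {R : realType} (p1 u1 p2 u2 : R -> R) x x' :
  C2_nonneg p1 u1 -> C2_nonneg p2 u2 ->
  0 <= x -> 0 < x' -> u2 x' < u1 x ->
  exists eps : R, [/\ 0 < eps, eps <= x' &
    p2 x' - p2 (x' - eps) < p1 (x + eps) - p1 x].
Proof.
move=> Hc1 Hc2 x0 x'0 ux.
pose e := (u1 x - u2 x') / 2.
have e0 : 0 < e by rewrite /e divr_gt0 // subr_gt0.
have [d1 d10 H1] := @DQ R p1 u1 Hc1 x x0 e e0.
have [d2 d20 H2] := @DQ R p2 u2 Hc2 x' (ltW x'0) e e0.
pose m := Num.min d1 (Num.min d2 x').
have m0 : 0 < m by rewrite /m !lt_min d10 d20 x'0.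
pose eps := m / 2.
have eps0 : 0 < eps by rewrite /eps divr_gt0.
have epsm : eps < m by rewrite /eps; lra.
have md1 : m <= d1 by rewrite /m ge_min lexx.
have md2 : m <= d2 by rewrite /m !ge_min lexx orbT.
have mx' : m <= x' by rewrite /m !ge_min lexx !orbT.
exists eps; split => //; first lra.
have A := H1 eps (negbT (gt_eqF eps0)).
rewrite gtr0_norm // in A.
have {A} A := A (lt_le_trans epsm md1) (addr_ge0 x0 (ltW eps0)).
have B := H2 (- eps).
rewrite oppr_eq0 normrN gtr0_norm // in B.
have {B} B := B (negbT (gt_eqF eps0)) (lt_le_trans epsm md2) (ltac:(lra)).
move: A B; rewrite !ltr_distlC => /andP[A _] /andP[_ B].
rewrite invrN mulNr -mulrN opprB in B.
have : eps^-1 * (p2 x' - p2 (x' - eps)) < eps^-1 * (p1 (x + eps) - p1 x).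
  rewrite /e in A B; lra.
by rewrite ltr_pM2l // invr_gt0.
Qed.

Lemma continuous_bigsum {R : realType} {T : topologicalType} {I : Type}
  (r : seq I) (F : I -> T -> R^o) :
  (forall i, continuous (F i)) -> continuous (fun v => \sum_(i <- r) F i v).
Proof.
move=> HF; elim: r => [|a r IH].
  have -> : (fun v : T => \sum_(i <- [::]) F i v) = (fun=> (0 : R^o)).
    by apply: funext => v; rewrite big_nil.
  exact: cst_continuous.
have -> : (fun v => \sum_(i <- a :: r) F i v) =
          (F a + (fun v => \sum_(i <- r) F i v)).
  by apply: funext => v; rewrite big_cons.
by move=> v; apply: continuousD; [exact: HF | exact: IH].
Qed.

Section Global.
Variables (R : realType) (V : finType).

Definition KKT (u : V -> R -> R) (x : V -> R) :=
  forall i, x i != 0 -> forall j, u j (x j) <= u i (x i).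

Lemma sum_le_eq (x y : V -> R) : (forall i, y i <= x i) ->
  \sum_i x i = \sum_i y i -> x = y.
Proof.
move=> Hle Hs; apply: funext => i.
have H0 : \sum_(k | true) (x k - y k) = 0 by rewrite sumrB Hs subrr.
have Hp : forall k, true -> 0 <= x k - y k by move=> k _; rewrite subr_ge0.
have := psumr_eq0P Hp H0.
move=> /(_ i isT) /eqP; rewrite subr_eq0 => /eqP //.
Qed.

Lemma kkt_unique (u : V -> R -> R) rho (x y : V -> R) :
  (forall i a b, 0 <= a -> a < b -> u i b < u i a) ->
  simplexS rho x -> simplexS rho y -> KKT u x -> KKT u y -> x = y.
Proof.
move=> Hst [x0 sx] [y0 sy] Kx Ky.
have key : forall i j, y i < x i -> x j < y j -> False.
  move=> i j yx xy.
  have xi0 : x i != 0 by rewrite gt_eqF // (le_lt_trans (y0 i)).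
  have yj0 : y j != 0 by rewrite gt_eqF // (le_lt_trans (x0 j)).
  have h1 := Kx i xi0 j; have h2 := Ky j yj0 i.
  have h3 := Hst i _ _ (y0 i) yx; have h4 := Hst j _ _ (x0 j) xy.
  lra.
have [/existsP [i Hi]|Hn] := boolP [exists i, y i < x i].
  apply: sum_le_eq; last by rewrite sx sy.
  by move=> j; rewrite leNgt; apply/negP => /(key i j Hi).
apply/esym/sum_le_eq; last by rewrite sx sy.
move=> j; rewrite leNgt; apply/negP => Hj; move/negP: Hn; apply.
by apply/existsP; exists j.
Qed.


Lemma ne_kkt (E : rel V) (u : V -> R -> R) rho (y : V -> R) :
  (forall i a b, 0 <= a -> a < b -> u i b < u i a) ->
  QCH E (fun i => u i 0) -> NE E u rho y -> KKT u y.
Proof.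
move=> Hst Hq [[y0 sy] Hne] i yi0 j.
have [<-//|ji] := eqVneq j i.
rewrite leNgt; apply/negP => Hlt.
have [t [_ Hp Hl Hqc]] := Hq i j (negbT (introF eqP (fun e => (negP ji) (introT eqP (esym e))))).
pose lam := u i (y i).
have yi_pos : 0 < y i by rewrite lt_neqAle eq_sym yi0 y0.
have lai : lam < u i 0 by apply: Hst.
have laj : lam < u j 0.
  apply: lt_le_trans Hlt _.
  have [->//|yj] := eqVneq (y j) 0.
  by apply/ltW/Hst => //; rewrite lt_neqAle eq_sym yj y0.
have Ha : forall m, (m < size (i :: t))%N -> lam < u (nth i (i :: t) m) 0.
  move=> m hm.
  have hm' : (0 <= m <= size t)%N by rewrite leq0n -ltnS.
  have := Hqc 0%N m (size t) hm' (ltnSn _).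
  have -> : nth i (i :: t) (size t) = j.
    by rewrite -Hl; exact: (nth_last i (i :: t)).
  rewrite /= => H; apply: lt_le_trans H.
  by rewrite lt_min lai laj.
have Hind : forall m, (m < size (i :: t))%N ->
    (u (nth i (i :: t) m) (y (nth i (i :: t) m)) <= lam) /\ (y (nth i (i :: t) m) != 0).
  elim => [|m IH] hm.
    by split; [exact: lexx | exact: yi0].
  have [IH1 IH2] := IH (ltnW hm).
  have hE : E (nth i (i :: t) m) (nth i t m).
    by move/pathP: Hp => /(_ i m); apply; rewrite -ltnS.
  have h1 := Hne _ IH2 _ hE.
  have h2 : u (nth i t m) (y (nth i t m)) <= lam by apply: le_trans h1 IH1.
  split => //.
  apply/negP => /eqP h0; move: h2; rewrite h0 leNgt => /negP; apply.
  exact: (Ha m.+1 hm).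
have [H1 _] := Hind (size t) (ltnSn _).
have Hj : nth i (i :: t) (size t) = j.
  by rewrite -Hl; exact: (nth_last i (i :: t)).
rewrite Hj in H1.
by move: H1; rewrite leNgt Hlt.
Qed.


Lemma sum2 (g : V -> R) i j : i != j ->
  (forall k, k != i -> k != j -> g k = 0) -> \sum_k g k = g i + g j.
Proof.
move=> ij Hg; rewrite (bigD1 i) //= (bigD1 j) /=; last by rewrite eq_sym.
rewrite big1 ?addr0 // => k /andP[ki kj]; exact: Hg.
Qed.

Lemma max_kkt (p u : V -> R -> R) rho (y : V -> R) :
  (forall i, C2_nonneg (p i) (u i)) -> simplexS rho y ->
  (forall z, simplexS rho z -> Upot p z <= Upot p y) -> KKT u y.
Proof.
move=> Hc [y0 sy] Hmax i yi0 j; rewrite leNgt; apply/negP => Hlt.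
have ij : i != j by apply/eqP => e; rewrite e ltxx in Hlt.
have yi_pos : 0 < y i by rewrite lt_neqAle eq_sym yi0 y0.
have [eps [e0 ei Hp]] := @perturb2 R (p j) (u j) (p i) (u i) (y j) (y i) (Hc j) (Hc i) (y0 j) yi_pos Hlt.
pose z := fun k => if k == j then y j + eps else if k == i then y i - eps else y k.
have zi : z i = y i - eps by rewrite /z (negbTE ij) eqxx.
have zj : z j = y j + eps by rewrite /z eqxx.
have zk : forall k, k != i -> k != j -> z k = y k.
  by move=> k ki kj; rewrite /z (negbTE ki) (negbTE kj).
have zs : simplexS rho z.
  split.
    move=> k; rewrite /z; case: (k == j); first by rewrite addr_ge0 // ltW.
    case: (k == i); last exact: y0.
    by rewrite subr_ge0.
  apply/eqP; rewrite -subr_eq0 -sy -sumrB (@sum2 _ i j ij).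
    by rewrite zi zj; apply/eqP; ring.
  by move=> k ki kj; rewrite zk // subrr.
have := Hmax z zs; rewrite leNgt => /negP; apply.
rewrite -subr_gt0 /Upot -sumrB (@sum2 _ i j ij).
  rewrite zi zj; lra.
by move=> k ki kj; rewrite zk // subrr.
Qed.

End Global.

Lemma exists_max (R : realType) (V : finType) (p u : V -> R -> R) rho :
  (0 < #|V|)%N -> (forall i, C2_nonneg (p i) (u i)) -> 0 <= rho ->
  exists y, simplexS rho y /\
    forall z, simplexS rho z -> Upot p z <= Upot p y.
Proof.
move=> Vn Hc rho0.
pose n := #|V|.
pose toF (v : 'rV[R]_n) : V -> R := fun i => v ord0 (enum_rank i).
pose fromF (x : V -> R) : 'rV[R]_n := \row_k x (enum_val k).
have toFK : forall x, toF (fromF x) = x.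
  by move=> x; apply: funext => i; rewrite /toF /fromF mxE enum_rankK.
pose S (v : 'rV[R]_n) : R^o := \sum_i v ord0 (enum_rank i).
pose A := [set v : 'rV[R]_n | forall k, `[0, rho]%classic (v ord0 k)] `&`
          (S @^-1` [set x | x = rho]).
have contS : continuous S.
  apply: (@continuous_bigsum R _ V (index_enum V)
            (fun i (v : 'rV[R]_n) => (v ord0 (enum_rank i) : R^o))).
  move=> i; exact: coord_continuous.
have cA : compact A.
  apply: compact_closedI.
    apply: (@rV_compact R n (fun=> `[0, rho]%classic)) => _; exact: segment_compact.
  apply: ((continuous_closedP S).1 contS). exact: closed_eq.
have in_A : forall x, simplexS rho x -> A (fromF x).
  move=> x [x0 sx]; split.
    move=> k; rewrite /fromF mxE /= in_itv /=; apply/andP; split => //.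
    by rewrite -sx (bigD1 (enum_val k)) //= lerDl sumr_ge0.
  rewrite /= /S -sx; apply: eq_bigr => i _.
  by rewrite /fromF mxE enum_rankK.
have toF_in : forall v, A v -> simplexS rho (toF v).
  move=> v [Hb Hs]; split; last exact: Hs.
  move=> i; have := Hb (enum_rank i); rewrite /= in_itv /= => /andP[] //.
pose i0 := enum_val (Ordinal Vn).
pose x0 := fun i : V => if i == i0 then rho else 0.
have sx0 : simplexS rho x0.
  split; first by move=> i; rewrite /x0; case: eqP.
  rewrite (bigD1 i0) //= big1 ?addr0 /x0 ?eqxx // => i /negbTE ->.
  by [].
have A0 : A !=set0 by exists (fromF x0); exact: in_A.
pose ft (v : 'rV[R]_n) : R^o := \sum_i p i (clamp0 (v ord0 (enum_rank i))).
have contft : continuous ft.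
  apply: (@continuous_bigsum R _ V (index_enum V)
            (fun i (v : 'rV[R]_n) => (p i (clamp0 (v ord0 (enum_rank i))) : R^o))).
  move=> i v; apply: (@continuous_comp _ _ _ (fun v : 'rV[R]_n => v ord0 (enum_rank i))
     (fun t : R => (p i (clamp0 t) : R^o))).
    exact: coord_continuous.
  exact: (@ptilde_cont R (p i) (u i) (Hc i) _).
have [c cinA Hmax] := EVT_max_rV A0 cA (continuous_subspaceT contft).
have ftU : forall v, A v -> Upot p (toF v) = ft v - \sum_i p i 0.
  move=> v /toF_in [v0 _]; rewrite /Upot sumrB; congr (_ - _).
  apply: eq_bigr => i _; congr (p i _).
  by rewrite /clamp0 ltNge v0.
exists (toF c); split.
  apply: toF_in; rewrite inE in cinA; exact cinA.
move=> z zs.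
have Az := in_A z zs.
have Ac : A c by rewrite inE in cinA; exact cinA.
rewrite -(toFK z) (ftU _ Az) (ftU _ Ac) lerD2r.
by apply: Hmax; rewrite inE.
Qed.

Theorem mainTheorem3 (R : realType) (V : finType) (E : rel V)
    (p u : V -> R -> R) (rho : R) :
  symmetric E -> irreflexive E -> (forall i j : V, connect E i j) ->
  (0 < #|V|)%N ->
  (forall i : V, C2_nonneg (p i) (u i)) ->
  (forall i : V, strictly_concave_nonneg (p i)) ->
  0 <= rho ->
  QCH E (fun i => u i 0) ->
  exists x : V -> R,
    (forall y : V -> R, NE E u rho y <-> y = x) /\
    simplexS rho x /\
    (forall y : V -> R, simplexS rho y -> Upot p y <= Upot p x) /\
    (forall y : V -> R, simplexS rho y ->
       (forall z : V -> R, simplexS rho z -> Upot p z <= Upot p y) -> y = x).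
Proof.
move=> _ _ _ Vn Hc Hs rho0 Hq.
have Hst : forall i a b, 0 <= a -> a < b -> u i b < u i a.
  by move=> i a b a0 ab; exact: (@u_strict R (p i) (u i) (Hc i) (Hs i) a b a0 ab).
have [x [xs xmax]] := @exists_max R V p u rho Vn Hc rho0.
have xK := @max_kkt R V p u rho x Hc xs xmax.
exists x; split; last split => //; last split => //.
  move=> y; split.
    move=> Hy; have yK := @ne_kkt R V E u rho y Hst Hq Hy.
    by case: Hy => ys _; exact: (@kkt_unique R V u rho y x Hst ys xs yK xK).
  move=> ->; split => // i xi j _; exact: xK.
move=> y ys ymax; have yK := @max_kkt R V p u rho y Hc ys ymax.
exact: (@kkt_unique R V u rho y x Hst ys xs yK xK).
Qed.
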